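(* Let $\mathcal N$ be an occurrence net and $x$ a place of $\mathcal N$. Then the last known cut $\mathit{LKC}(x)=\{p\in\mathcal P\mid p\not<x\ \text{and}\ t<x\text{ for all }t\in{}^\bullet p\}$ is a cut of $\mathcal N$.
   Context: A Petri net $(\mathcal P,\mathcal T,\mathcal F,\mathit{In})$ has disjoint places $\mathcal P$ and transitions $\mathcal T$, a flow relation $\mathcal F$ that is a multiset over $(\mathcal P\times\mathcal T)\cup(\mathcal T\times\mathcal P)$, and a finite multiset $\mathit{In}$ over $\mathcal P$; ${}^\bullet x(y)=\mathcal F(y,x)$, $x^\bullet(y)=\mathcal F(x,y)$, and every transition has finite nonempty pre- and postcondition. Let $<$ be the transitive closure of $\{(x,y)\mid\mathcal F(x,y)>0\}$ and $\le$ its reflexive-transitive closure. Nodes $x,y$ are in conflict if there is a place $p\ne x,y$ and distinct transitions $t_1,t_2\in p^\bullet$ with $t_1\le x$ and $t_2\le y$; they are concurrent if neither $x\le y$ nor $y\le x$ nor in conflict. An occurrence net is a Petri net in which pre- and postconditions of transitions are sets, every place has at most one incoming transition, $\mathit{In}=\{p\mid{}^\bullet p=\emptyset\}$, $\mathcal F^{-1}$ is well-founded, and no transition is in conflict with itself. A cut is a maximal set of pairwise concurrent places. *)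

(* Defs.v *)
From Stdlib Require Import Relations List Arith.
Set Implicit Arguments.

(* A Petri net: places and transitions are two (disjoint, since they are
   combined as a sum type below) types; the flow relation is a multiset over
   (P x T) + (T x P), given by two nat-valued functions; In is a multiset
   over P. *)
Record PetriNet := mkNet {
  place : Type;
  trans : Type;
  Fpt : place -> trans -> nat;
  Ftp : trans -> place -> nat;
  Init : place -> nat
}.

Definition node (N : PetriNet) : Type := (place N + trans N)%type.

Definition flow (N : PetriNet) (x y : node N) : nat :=
  match x, y with
  | inl p, inr t => Fpt N p t
  | inr t, inl p => Ftp N t p
  | _, _ => 0
  end.

Definition arc (N : PetriNet) (x y : node N) : Prop := 0 < flow x y.

Definition lt_net (N : PetriNet) : relation (node N) := clos_trans _ (@arc N).
Definition le_net (N : PetriNet) : relation (node N) := clos_refl_trans _ (@arc N).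

Definition finite_set (A : Type) (S : A -> Prop) : Prop :=
  exists l : list A, forall a, S a -> List.In a l.

Definition is_petri_net (N : PetriNet) : Prop :=
  (forall t : trans N,
      finite_set (fun p => 0 < Fpt N p t) /\ (exists p, 0 < Fpt N p t) /\
      finite_set (fun p => 0 < Ftp N t p) /\ (exists p, 0 < Ftp N t p)) /\
  finite_set (fun p => 0 < Init N p).

Definition conflict (N : PetriNet) (x y : node N) : Prop :=
  exists (p : place N) (t1 t2 : trans N),
    inl p <> x /\ inl p <> y /\ t1 <> t2 /\
    0 < Fpt N p t1 /\ 0 < Fpt N p t2 /\
    le_net (inr t1) x /\ le_net (inr t2) y.

Definition concurrent (N : PetriNet) (x y : node N) : Prop :=
  ~ le_net x y /\ ~ le_net y x /\ ~ conflict x y.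

Definition occurrence_net (N : PetriNet) : Prop :=
  is_petri_net N /\
  (* pre- and postconditions of transitions are sets *)
  (forall p t, Fpt N p t <= 1) /\ (forall t p, Ftp N t p <= 1) /\
  (forall p t1 t2, 0 < Ftp N t1 p -> 0 < Ftp N t2 p -> t1 = t2) /\
  (* In = { p | pre(p) empty } (as a set, i.e. multiplicity 1) *)
  (forall p, (Init N p = 1 /\ forall t, Ftp N t p = 0) \/
             (Init N p = 0 /\ exists t, 0 < Ftp N t p)) /\
  (* F^{-1} well-founded: no infinite backward chain ... F x2 F x1 *)
  well_founded (@arc N) /\
  (forall t : trans N, ~ conflict (inr t : node N) (inr t)).

Definition pairwise_concurrent (N : PetriNet) (S : place N -> Prop) : Prop :=
  forall p q, S p -> S q -> p <> q -> concurrent (inl p : node N) (inl q).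

Definition cut (N : PetriNet) (S : place N -> Prop) : Prop :=
  pairwise_concurrent N S /\
  forall S' : place N -> Prop,
    (forall p, S p -> S' p) -> pairwise_concurrent N S' -> forall p, S' p -> S p.

Definition LKC (N : PetriNet) (x : place N) : place N -> Prop :=
  fun p => ~ lt_net (inl p : node N) (inl x) /\
           forall t : trans N, 0 < Ftp N t p -> lt_net (inr t : node N) (inl x).

(* Main.v *)
Require Import Defs.
From Stdlib Require Import Relations List Arith Lia Classical Wellfounded.

Section S.
Context {N : PetriNet}.

Lemma acyc : well_founded (@arc N) -> forall a : node N, ~ lt_net a a.
Proof.
  intros Hwf a. pose proof (wf_clos_trans _ _ Hwf a) as Ha.
  induction Ha as [a _ IH]. intro H. exact (IH a H H).
Qed.

Lemma lt_le (a b : node N) : lt_net a b -> le_net a b.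
Proof. unfold lt_net, le_net. intro H. apply clos_t_clos_rt. exact H. Qed.

Lemma lt_trans' (a b c : node N) : lt_net a b -> lt_net b c -> lt_net a c.
Proof. intros; eapply t_trans; eauto. Qed.

Lemma le_lt_lt (a b c : node N) : le_net a b -> lt_net b c -> lt_net a c.
Proof.
  intros H1 H2. apply clos_rt_rt1n in H1. induction H1; auto.
  eapply t_trans; [apply t_step; exact H| apply IHclos_refl_trans_1n; exact H2].
Qed.

Lemma lt_le_lt (a b c : node N) : lt_net a b -> le_net b c -> lt_net a c.
Proof.
  intros H1 H2. apply clos_rt_rtn1 in H2. induction H2; auto.
  eapply t_trans; [exact IHclos_refl_trans_n1| apply t_step; exact H].
Qed.

Lemma le_trans' (a b c : node N) : le_net a b -> le_net b c -> le_net a c.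
Proof. intros; eapply rt_trans; eauto. Qed.

Lemma pre_lt (a : node N) p : lt_net a (inl p) ->
  exists t', 0 < Ftp N t' p /\ le_net a (inr t').
Proof.
  intro H. apply clos_trans_tn1 in H. inversion H; subst.
  - destruct a as [r|t]; unfold arc in H0; simpl in H0; [lia|].
    exists t; split; auto. apply rt_refl.
  - destruct y as [r|t]; unfold arc in H0; simpl in H0; [lia|].
    exists t; split; auto. apply lt_le. apply clos_tn1_trans. exact H1.
Qed.

Lemma pre_le (a : node N) p : le_net a (inl p) ->
  a = inl p \/ exists t', 0 < Ftp N t' p /\ le_net a (inr t').
Proof.
  intro H. apply clos_rt_rtn1 in H. inversion H; subst; [left; reflexivity|].
  right. destruct y as [r|t]; unfold arc in H0; simpl in H0; [lia|].
  exists t; split; auto. apply clos_rtn1_rt. exact H1.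
Qed.

Lemma post_lt (r : place N) b : lt_net (inl r) b ->
  exists u, 0 < Fpt N r u /\ le_net (inr u) b.
Proof.
  intro H. apply clos_trans_t1n in H. inversion H; subst.
  - destruct b as [r'|t]; unfold arc in H0; simpl in H0; [lia|].
    exists t; split; auto. apply rt_refl.
  - destruct y as [r'|t]; unfold arc in H0; simpl in H0; [lia|].
    exists t; split; auto. apply lt_le. apply clos_t1n_trans. exact H1.
Qed.

End S.
Arguments pre_le {N a p}.
Arguments pre_lt {N a p}.
Arguments post_lt {N r b}.
Arguments lt_le {N a b}.
Arguments le_lt_lt {N a b c}.
Arguments lt_le_lt {N a b c}.
Arguments le_trans' {N a b c}.
Arguments lt_trans' {N a b c}.

Theorem mainTheorem16 (N : PetriNet) (HN : occurrence_net N) (x : place N) :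
  cut N (LKC N x).
Proof.
  destruct HN as [[Htr Hin] [_ [_ [Huniq [_ [Hwf Hnc]]]]]].
  assert (Hac := acyc Hwf).
  assert (Hx : LKC N x x).
  { split; [apply Hac|]. intros t Ht. apply t_step. unfold arc; simpl; exact Ht. }
  assert (below : forall p t, LKC N x p -> le_net (inr t) (inl p) ->
             exists t0, 0 < Ftp N t0 x /\ le_net (inr t : node N) (inr t0)).
  { intros p t [Hp1 Hp2] Hle. destruct (pre_le Hle) as [E|[t' [Ht' Hle']]]; [discriminate|].
    destruct (pre_lt (Hp2 t' Ht')) as [t0 [Ht0 Hle0]].
    exists t0; split; auto. eapply le_trans'; eauto. }
  split.
  - intros p q Hp Hq Hpq.
    assert (nle : forall p q, LKC N x p -> LKC N x q -> p <> q ->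
               ~ le_net (inl p : node N) (inl q)).
    { clear p q Hp Hq Hpq. intros p q Hp Hq Hpq Hle.
      destruct (pre_le Hle) as [E|[t' [Ht' Hle']]]; [congruence|].
      apply (proj1 Hp). eapply le_lt_lt; [exact Hle'|]. apply (proj2 Hq). exact Ht'. }
    split; [|split]; [apply nle; auto|apply nle; auto|].
    intros [r [t1 [t2 [_ [_ [Hne [H1 [H2 [L1 L2]]]]]]]]].
    destruct (below _ _ Hp L1) as [t0 [Ht0 Le0]].
    destruct (below _ _ Hq L2) as [t0' [Ht0' Le0']].
    assert (t0 = t0') by (eapply Huniq; eauto). subst t0'.
    apply (Hnc t0). exists r, t1, t2. repeat split; auto; discriminate.
  - intros S' Hsub Hpc q Hq.
    destruct (classic (LKC N x q)) as [|Hnq]; [assumption|exfalso].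
    assert (Hqx : q <> x) by (intro; subst; contradiction).
    destruct (Hpc q x Hq (Hsub x Hx) Hqx) as [Nqx [Nxq Ncf]].
    destruct (classic (lt_net (inl q : node N) (inl x))) as [Hlt|Hnlt].
    { apply Nqx. apply lt_le. exact Hlt. }
    assert (Ht : exists t, 0 < Ftp N t q /\ ~ lt_net (inr t : node N) (inl x)).
    { apply NNPP. intro Hne. apply Hnq. split; auto. intros t Ht.
      apply NNPP. intro H. apply Hne. eauto. }
    destruct Ht as [t [Htq Htx]].
    assert (key : forall n : node N, forall t, n = inr t -> ~ lt_net (inr t : node N) (inl x) ->
      (exists p, LKC N x p /\ lt_net (inl p : node N) (inr t)) \/
      (exists r u t1, 0 < Fpt N r t1 /\ 0 < Fpt N r u /\ u <> t1 /\
         lt_net (inr u : node N) (inl x) /\ lt_net (inl r : node N) (inl x) /\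
         le_net (inr t1 : node N) (inr t))).
    { intro n. induction (wf_clos_trans _ _ Hwf n) as [n _ IH].
      intros t0 En Ht0. subst n.
      destruct (Htr t0) as [_ [[r0 Hr0] _]].
      destruct (classic (forall r, 0 < Fpt N r t0 -> lt_net (inl r : node N) (inl x)))
        as [Hall|Hex].
      + right. destruct (post_lt (Hall r0 Hr0)) as [u [Hu Hux]].
        assert (Hult : lt_net (inr u : node N) (inl x)).
        { destruct (pre_le Hux) as [E|[t' [Ht' Hle']]]; [discriminate|].
          eapply le_lt_lt; [exact Hle'| apply t_step; exact Ht']. }
        exists r0, u, t0. repeat split; auto.
        * intro; subst; contradiction.
        * apply rt_refl.
      + assert (Hr : exists r, 0 < Fpt N r t0 /\ ~ lt_net (inl r : node N) (inl x)).
        { apply NNPP. intro Hne. apply Hex. intros r Hr. apply NNPP. intro. apply Hne; eauto. }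
        destruct Hr as [r [Hr Hrx]].
        assert (Hrt : lt_net (inl r : node N) (inr t0)) by (apply t_step; exact Hr).
        destruct (classic (LKC N x r)) as [HL|HnL].
        * left. exists r. auto.
        * assert (Ht'' : exists t'', 0 < Ftp N t'' r /\ ~ lt_net (inr t'' : node N) (inl x)).
          { apply NNPP. intro Hne. apply HnL. split; auto. intros t' Ht'.
            apply NNPP. intro H. apply Hne. eauto. }
          destruct Ht'' as [t'' [Ht''r Ht''x]].
          assert (Hlt'' : lt_net (inr t'' : node N) (inr t0)).
          { eapply t_trans; [apply (t_step _ _ (inr t'') (inl r)); exact Ht''r| exact Hrt]. }
          destruct (IH (inr t'') Hlt'' t'' eq_refl Ht''x) as [[p [Hp Hpl]]|[r' [u [t1 Hh]]]].
          -- left. exists p. split; auto. eapply t_trans; eauto.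
          -- right. exists r', u, t1. destruct Hh as [? [? [? [? [? Hle]]]]].
             repeat split; auto. eapply le_trans'; [exact Hle| apply lt_le; exact Hlt'']. }
    assert (Htqlt : lt_net (inr t : node N) (inl q)) by (apply t_step; exact Htq).
    destruct (key (inr t) t eq_refl Htx) as [[p [Hp Hpl]]|[r [u [t1 Hh]]]].
    + assert (Hpq : lt_net (inl p : node N) (inl q)) by (eapply t_trans; eauto).
      assert (p <> q) by (intro; subst; apply (Hac (inl q)); exact Hpq).
      destruct (Hpc p q (Hsub p Hp) Hq H) as [Hc _]. apply Hc, lt_le, Hpq.
    + destruct Hh as [Hr1 [Hru [Hne [Hux [Hrx Hle]]]]].
      assert (Hrq : lt_net (inl r : node N) (inl q)).
      { eapply lt_trans'; [apply (t_step _ _ (inl r) (inr t1)); exact Hr1|].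
        eapply le_lt_lt; eauto. }
      apply Ncf. exists r, t1, u. repeat split; auto.
      * intro E; injection E; intro; subst; apply (Hac _ Hrq).
      * intro E; injection E; intro; subst; apply (Hac _ Hrx).
      * eapply le_trans'; [exact Hle| apply lt_le; exact Htqlt].
      * apply lt_le; exact Hux.
Qed.
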